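(* Let $f$ be either \textsc{OneMinMax} or \textsc{LOTZ}, and let $\mathrm{score}(x,P)$ be a diversity-favouring measure on $\{0,1\}^n\setminus\{0^n,1^n\}$ with respect to $f$. Assume the population $P$ is a subset of the Pareto set, $P\subseteq X^*$. Sort $P$ by non-increasing $\mathrm{score}(x,P)$ and consider a parent selection mechanism based on $\mathrm{score}$ such that $r_i$ is the probability of selecting the $i$-th element of $P$ in this sorted sequence. Then, unless $P$ already covers the Pareto front (i.e. $f(P)=F^*$), the probability of selecting a good individual is at least $\min\{r_1,r_2,r_3\}$.
   Context: Search space $\{0,1\}^n$; objectives maximised. $\textsc{OneMinMax}(x)=(\sum_ix_i,\,n-\sum_ix_i)$; $\textsc{LOTZ}(x)=(\mathrm{LO}(x),\mathrm{TZ}(x))$ with $\mathrm{LO}$ the number of leading ones and $\mathrm{TZ}$ the number of trailing zeros. Dominance: $y$ dominates $x$ if $f_i(y)\ge f_i(x)$ for all $i$, strictly for some $i$. Pareto set $X^*$ (non-dominated points; all of $\{0,1\}^n$ for \textsc{OneMinMax}, $\{1^i0^{n-i}\}$ for \textsc{LOTZ}), Pareto front $F^*=f(X^* )$. Populations contain points with distinct objective vectors. Good: w.r.t. $P$, $x\in P\cap X^*$ is good if some Hamming neighbour $y$ of $x$ satisfies $y\in X^*$ and $f(y)\notin f(P)$; otherwise bad. A measure is diversity-favouring on $S$ (w.r.t. $f$) if for every population $P$ and all $x,y\in P\cap X^*\cap S$ with $x$ bad and $y$ good, $\mathrm{score}(x,P)<\mathrm{score}(y,P)$. *)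

(* Defs.v *)
From mathcomp Require Import all_boot all_order all_algebra.
Set Implicit Arguments. Unset Strict Implicit. Unset Printing Implicit Defensive.
Import Order.TTheory GRing.Theory Num.Theory.

Definition bits (n : nat) := n.-tuple bool.

Definition LO (s : seq bool) : nat := find negb s.
Definition TZ (s : seq bool) : nat := find id (rev s).

Inductive problem := OneMinMax | LOTZ.

Definition fobj (pb : problem) (n : nat) (x : bits n) : nat * nat :=
  match pb with
  | OneMinMax => (count id x, n - count id x)
  | LOTZ => (LO x, TZ x)
  end.

Definition dominates (u v : nat * nat) : bool :=
  [&& (v.1 <= u.1)%N, (v.2 <= u.2)%N & ((v.1 < u.1)%N || (v.2 < u.2)%N)].

Definition pareto (pb : problem) (n : nat) (x : bits n) : bool :=
  [forall y : bits n, ~~ dominates (fobj pb y) (fobj pb x)].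

Definition hamming (n : nat) (x y : bits n) : nat :=
  count (fun p => p.1 != p.2) (zip x y).

Definition population (pb : problem) (n : nat) (P : {set bits n}) : Prop :=
  {in P &, injective (fobj pb (n:=n))}.

Definition good (pb : problem) (n : nat) (P : {set bits n}) (x : bits n) : bool :=
  [&& x \in P, pareto pb x &
      [exists y : bits n, [&& hamming x y == 1%N, pareto pb y &
                             [forall z in P, fobj pb z != fobj pb y]]]].

Definition bad (pb : problem) (n : nat) (P : {set bits n}) (x : bits n) : bool :=
  [&& x \in P, pareto pb x & ~~ good pb P x].

Definition non_extreme (n : nat) (x : bits n) : bool :=
  (x != nseq_tuple n false) && (x != nseq_tuple n true).

Definition diversity_favouring (R : realDomainType) (pb : problem) (n : nat)
  (score : bits n -> {set bits n} -> R) : Prop :=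
  forall P : {set bits n}, population pb P ->
  forall x y : bits n,
    x \in P -> pareto pb x -> non_extreme x ->
    y \in P -> pareto pb y -> non_extreme y ->
    bad pb P x -> good pb P y -> (score x P < score y P)%R.

Definition covers_front (pb : problem) (n : nat) (P : {set bits n}) : bool :=
  [forall x : bits n, pareto pb x ==> [exists z in P, fobj pb z == fobj pb x]] &&
  [forall z in P, [exists x : bits n, pareto pb x && (fobj pb x == fobj pb z)]].

(* Main.v *)
Require Import Defs.
From mathcomp Require Import all_boot all_order all_algebra.
From mathcomp Require Import reals.
From mathcomp Require Import zify.
Import Order.TTheory GRing.Theory Num.Theory.
Set Implicit Arguments. Unset Strict Implicit.

Lemma zip_self_cnt (s : seq bool) : count (fun p => p.1 != p.2) (zip s s) = 0.
Proof. by elim: s => //= a s ->; rewrite eqxx. Qed.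

Lemma ham_cat (u v : seq bool) a b :
  count (fun p => p.1 != p.2) (zip (u ++ a :: v) (u ++ b :: v)) = (a != b).
Proof. by rewrite zip_cat // count_cat zip_self_cnt /= zip_self_cnt addn0. Qed.

Lemma flip_ex n (x : bits n) i b : i < n ->
  exists y : bits n, (y : seq bool) = take i x ++ b :: drop i.+1 x.
Proof.
move=> lt.
have H : size (take i x ++ b :: drop i.+1 x) == n.
  by rewrite size_cat /= size_takel ?size_drop size_tuple //; apply/eqP; lia.
by exists (Tuple H).
Qed.

Lemma flip_ham n (x y : bits n) i b : i < n ->
  (y : seq bool) = take i x ++ b :: drop i.+1 x ->
  hamming x y = (nth false x i != b) /\
  count id y + nth false x i = count id x + b.
Proof.
move=> lt Ey.
have Ex : (x : seq bool) = take i x ++ nth false x i :: drop i.+1 x.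
  by rewrite -drop_nth ?cat_take_drop // size_tuple.
split; first by rewrite /hamming Ey {1}Ex ham_cat.
rewrite Ey [in RHS]Ex !count_cat /=; lia.
Qed.

Lemma count_le n (x : bits n) : count id x <= n.
Proof. by have := count_size id x; rewrite size_tuple. Qed.

Lemma pareto_omm n (x : bits n) : pareto OneMinMax x.
Proof.
apply/forallP => y; rewrite /dominates /=.
have := count_le x; have := count_le y.
move=> ? ?; apply/negP => /and3P [h1 h2 /orP [h3|h3]]; lia.
Qed.

Lemma LO_TZ_le (s : seq bool) : LO s + TZ s <= size s.
Proof.
rewrite /LO /TZ.
set a := find negb s; set b := find id (rev s).
have ha : a <= size s by apply: find_size.
have hb : b <= size s by rewrite -(size_rev s); apply: find_size.
case: (leqP (a + b) (size s)) => // H.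
have h1 : size s - b < a by lia.
have h2 : b.-1 < b by lia.
have := before_find false h1; have := before_find false h2.
rewrite nth_rev; last by lia.
have -> : size s - b.-1.+1 = size s - b by lia.
by move=> -> .
Qed.

Lemma LO_TZ_bits n (z : bits n) : LO z + TZ z <= n.
Proof. by have := LO_TZ_le z; rewrite size_tuple. Qed.

Lemma LO_t i k : LO (nseq i true ++ nseq k false) = i.
Proof. by rewrite /LO; elim: i => [|i IH] /=; [case: k|rewrite IH]. Qed.

Lemma TZ_t i k : TZ (nseq i true ++ nseq k false) = k.
Proof.
rewrite /TZ rev_cat !rev_nseq.
by elim: k => [|k IH] /=; [case: i|rewrite IH].
Qed.

Lemma t_ex n i : i <= n ->
  exists y : bits n, (y : seq bool) = nseq i true ++ nseq (n - i) false.
Proof.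
move=> le.
have H : size (nseq i true ++ nseq (n - i) false) == n.
  by rewrite size_cat !size_nseq; apply/eqP; lia.
by exists (Tuple H).
Qed.

Lemma pareto_t n (y : bits n) i : (y : seq bool) = nseq i true ++ nseq (n - i) false ->
  i <= n -> pareto LOTZ y.
Proof.
move=> Ey le; apply/forallP => z; rewrite /dominates /= Ey LO_t TZ_t.
have := LO_TZ_bits z.
move=> hh; apply/negP => /and3P [h1 h2 /orP [h3|h3]]; lia.
Qed.

Lemma pareto_lotz n (x : bits n) : pareto LOTZ x ->
  LO x + TZ x = n /\ (x : seq bool) = nseq (LO x) true ++ nseq (n - LO x) false.
Proof.
move=> /forallP Hp.
have hle := LO_TZ_le x; rewrite size_tuple in hle.
have hsum : LO x + TZ x = n.
  case: (ltnP (LO x + TZ x) n) => h; last by lia.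
  have hl : LO x <= n by lia.
  have [y Ey] := t_ex hl.
  have := Hp y; rewrite /dominates /= Ey LO_t TZ_t.
  move/negP; case; apply/and3P; split => //; [lia|apply/orP; right; lia].
split => //.
apply: (@eq_from_nth _ false); first by rewrite size_cat !size_nseq size_tuple; lia.
move=> j; rewrite size_tuple => hj.
rewrite nth_cat size_nseq.
case: ltnP => hjl.
  rewrite nth_nseq hjl.
  have := before_find false hjl; rewrite -/(LO x).
  by case: (nth false x j).
rewrite nth_nseq ifT; last by lia.
have h1 : n - j.+1 < TZ x by lia.
have := before_find false h1; rewrite nth_rev ?size_tuple; last by lia.
by have -> : n - (n - j.+1).+1 = j by lia.
Qed.

Lemma nseqS_cat (c : nat) (a : bool) s : nseq c.+1 a ++ s = nseq c a ++ a :: s.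
Proof. by elim: c => //= c ->. Qed.

Definition lvl pb n (x : bits n) := (fobj pb x).1.

Lemma lvl_le pb n (x : bits n) : pareto pb x -> lvl pb x <= n.
Proof.
case: pb => /= Hx; rewrite /lvl /=; first exact: count_le.
by have := LO_TZ_bits x; lia.
Qed.

Lemma lvl_inj pb n (x z : bits n) : pareto pb x -> pareto pb z ->
  lvl pb x = lvl pb z -> fobj pb x = fobj pb z.
Proof.
case: pb => Hx Hz; rewrite /lvl /= => E; first by rewrite E.
have [h1 _] := pareto_lotz Hx; have [h2 _] := pareto_lotz Hz.
congr pair => //; lia.
Qed.

Lemma lvl_up pb n (x : bits n) : pareto pb x -> lvl pb x < n ->
  exists y, [/\ hamming x y = 1, pareto pb y & lvl pb y = (lvl pb x).+1].
Proof.
case: pb => Hx; rewrite /lvl /= => lt.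
- have hh : has negb x.
    rewrite has_count; have := count_predC id x; rewrite size_tuple.
    have -> : count (predC id) x = count negb x by []. lia.
  move: (hh); rewrite has_find size_tuple => hi.
  have := nth_find false hh => /negbTE hn.
  have [y Ey] := flip_ex x true hi.
  have [h1 h2] := flip_ham hi Ey.
  exists y; split => //; first by rewrite h1 hn.
    exact: pareto_omm.
  by rewrite hn in h2; lia.
- have [h1 Ex] := pareto_lotz Hx.
  have hl : (LO x).+1 <= n by [].
  have [y Ey] := t_ex hl.
  exists y; split.
  + rewrite /hamming Ex Ey.
    have -> : n - LO x = (n - (LO x).+1).+1 by lia.
    by rewrite nseqS_cat /= ham_cat.
  + exact: pareto_t Ey hl.
  + by rewrite Ey LO_t.
Qed.

Lemma lvl_down pb n (x : bits n) : pareto pb x -> 0 < lvl pb x ->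
  exists y, [/\ hamming x y = 1, pareto pb y & lvl pb y = (lvl pb x).-1].
Proof.
case: pb => Hx; rewrite /lvl /= => lt.
- have hh : has id x by rewrite has_count.
  move: (hh); rewrite has_find size_tuple => hi.
  have hn := nth_find false hh.
  have [y Ey] := flip_ex x false hi.
  have [h1 h2] := flip_ham hi Ey.
  exists y; split => //; first by rewrite h1 hn.
    exact: pareto_omm.
  by rewrite hn in h2; lia.
- have [h1 Ex] := pareto_lotz Hx.
  have hl : (LO x).-1 <= n by lia.
  have [y Ey] := t_ex hl.
  exists y; split.
  + rewrite /hamming Ex Ey.
    move: Ey hl; set c := (LO x).-1 => Ey hl.
    have -> : LO x = c.+1 by lia.
    have -> : n - c = (n - c.+1).+1 by lia.
    by rewrite nseqS_cat /= ham_cat.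
  + exact: pareto_t Ey hl.
  + by rewrite Ey LO_t.
Qed.

Lemma lvl_e0 pb n : lvl pb (nseq_tuple n false) = 0.
Proof. by case: pb; rewrite /lvl /= ?count_nseq ?muln0 //; case: n. Qed.

Lemma lvl_e1 pb n : lvl pb (nseq_tuple n true) = n.
Proof.
case: pb; rewrite /lvl /= ?count_nseq ?mul1n //.
by rewrite /LO; elim: n => //= n ->.
Qed.

Lemma walk_up (C : pred nat) g : ~~ C g -> forall k m, m + k = g -> C m ->
  exists c, [/\ m <= c, c < g, C c & ~~ C c.+1].
Proof.
move=> Cg; elim=> [|k IH] m E Cm; first by rewrite addn0 in E; subst; rewrite Cm in Cg.
case: (boolP (C m.+1)) => h; last by exists m; split => //; lia.
have [c [h1 h2 h3 h4]] := IH m.+1 ltac:(lia) h.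
by exists c; split => //; lia.
Qed.

Lemma walk_down (C : pred nat) g : ~~ C g -> forall k m, m = g + k -> C m ->
  exists c, [/\ g < c, c <= m, C c & ~~ C c.-1].
Proof.
move=> Cg; elim=> [|k IH] m E Cm; first by rewrite addn0 in E; subst; rewrite Cm in Cg.
case: (boolP (C m.-1)) => h; last by exists m; split => //; lia.
have [c [h1 h2 h3 h4]] := IH m.-1 ltac:(lia) h.
by exists c; split => //; lia.
Qed.

Unset Implicit Arguments.
Local Open Scope ring_scope.

Theorem lemma3 (R : realType) (n : nat) (pb : problem)
  (score : bits n -> {set bits n} -> R)
  (Hdiv : diversity_favouring pb score)
  (P : {set bits n}) (HP : population pb P)
  (HPX : forall x, x \in P -> pareto pb x)
  (s : seq (bits n)) (Hperm : perm_eq s (enum P))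
  (Hsort : sorted (fun x y => score y P <= score x P) s)
  (r : seq R) (Hsize : size r = size s)
  (Hr0 : all (fun p => 0 <= p) r) (Hr1 : \sum_(p <- r) p = 1)
  (Hcov : ~~ covers_front pb P) :
  Num.min r`_0 (Num.min r`_1 r`_2) <= \sum_(q <- zip s r | good pb P q.1) q.2.
Proof.
have Hu : uniq s by rewrite (perm_uniq Hperm) enum_uniq.
have Hmem : forall x, (x \in s) = (x \in P) by move=> x; rewrite (perm_mem Hperm) mem_enum.
pose C k := [exists z in P, lvl pb z == k].
have Hgood : forall z, z \in P ->
    (((lvl pb z < n)%N && ~~ C (lvl pb z).+1) || ((0 < lvl pb z)%N && ~~ C (lvl pb z).-1))
    -> good pb P z.
  move=> z zP /orP [/andP [lt nC]|/andP [lt nC]].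
  - have [y [h1 h2 h3]] := lvl_up (HPX _ zP) lt.
    rewrite /good zP HPX //=; apply/existsP; exists y; rewrite h1 h2 /=.
    apply/forallP => z'; apply/implyP => z'P; apply/eqP => E.
    move/negP: nC; apply; apply/existsP; exists z'; rewrite z'P /= /lvl E.
    by apply/eqP; exact: h3.
  - have [y [h1 h2 h3]] := lvl_down (HPX _ zP) lt.
    rewrite /good zP HPX //=; apply/existsP; exists y; rewrite h1 h2 /=.
    apply/forallP => z'; apply/implyP => z'P; apply/eqP => E.
    move/negP: nC; apply; apply/existsP; exists z'; rewrite z'P /= /lvl E.
    by apply/eqP; exact: h3.
have [g gle gC] : exists2 g, (g <= n)%N & ~~ C g.
  move: Hcov; rewrite /covers_front negb_and => /orP [].
  - rewrite negb_forall => /existsP [x]; rewrite negb_imply => /andP [px /existsPn Hn].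
    exists (lvl pb x); first exact: lvl_le.
    apply/existsP => [[z /andP [zP /eqP E]]].
    have := Hn z; rewrite zP /= (lvl_inj (HPX _ zP) px E) eqxx //.
  - rewrite negb_forall => /existsP [z]; rewrite negb_imply => /andP [zP /existsPn Hn].
    by have := Hn z; rewrite HPX //= eqxx.
have Hs0 : (0 < size s)%N.
  case: (posnP (size s)) => // /eqP; rewrite -Hsize size_eq0 => /eqP Er.
  by move: Hr1; rewrite Er big_nil => /eqP; rewrite eq_sym oner_eq0.
have Hwalk : forall m, m \in P -> exists z, [/\ z \in P, good pb P z &
     ((0 < lvl pb m < n)%N -> (0 < lvl pb z < n)%N)].
  move=> m mP.
  have Cm : C (lvl pb m) by apply/existsP; exists m; rewrite mP eqxx.
  have lm := lvl_le (HPX _ mP).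
  case: (ltngtP (lvl pb m) g) => H.
  - have E : (lvl pb m + (g - lvl pb m))%N = g by lia.
    have [c [h1 h2 h3 h4]] := walk_up gC E Cm.
    move/existsP: h3 => [z /andP [zP /eqP Ez]].
    exists z; split => //; last by move=> ?; rewrite Ez; lia.
    by apply: (Hgood z zP); apply/orP; left; rewrite Ez h4 andbT; lia.
  - have E : lvl pb m = (g + (lvl pb m - g))%N by lia.
    have [c [h1 h2 h3 h4]] := walk_down gC E Cm.
    move/existsP: h3 => [z /andP [zP /eqP Ez]].
    exists z; split => //; last by move=> ?; rewrite Ez; lia.
    by apply: (Hgood z zP); apply/orP; right; rewrite Ez h4 andbT; lia.
  - by rewrite -H Cm in gC.
pose d := nseq_tuple n false.
have hasg : has (good pb P) s.
  have [z [zP gz _]] := Hwalk (nth d s 0) ltac:(by rewrite -Hmem mem_nth).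
  by apply/hasP; exists z; rewrite ?Hmem.
set j := find (good pb P) s.
have hj : (j < size s)%N by rewrite -has_find.
have gj : good pb P (nth d s j) := nth_find d hasg.
have key : r`_j <= \sum_(q <- zip s r | good pb P q.1) q.2.
  rewrite (big_nth (d, 0)) size_zip Hsize minnn big_mkord (bigD1 (Ordinal hj)) /=;
    last by rewrite nth_zip.
  rewrite nth_zip //= lerDl; apply: sumr_ge0 => i _; rewrite nth_zip //=.
  by move/all_nthP: Hr0; apply; rewrite Hsize.
have jdef : j = find (good pb P) s by [].
clearbody j.
suff j2 : (j <= 2)%N.
  move: j2 key hj gj jdef; case: j => [|[|[|]]] //= _ key _ _ _; apply: le_trans key;
    rewrite ?ge_min lexx ?orbT //.
rewrite leqNgt; apply/negP => j3.
pose x0 := nth d s 0; pose x1 := nth d s 1; pose x2 := nth d s 2.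
have ng : forall k, (k < 3)%N -> good pb P (nth d s k) = false.
  by move=> k hk; apply: before_find; rewrite -jdef; apply: leq_trans hk j3.
have inP : forall k, (k < 3)%N -> nth d s k \in P.
  by move=> k hk; rewrite -Hmem mem_nth //; apply: leq_trans hk (leq_trans j3 (ltnW hj)).
have dis : forall a b, (a < 3)%N -> (b < 3)%N -> a != b -> nth d s a != nth d s b.
  move=> a b ha hb hab; rewrite nth_uniq //.
  - by apply: leq_trans ha (leq_trans j3 (ltnW hj)).
  - by apply: leq_trans hb (leq_trans j3 (ltnW hj)).
have ldis : forall a b, (a < 3)%N -> (b < 3)%N -> a != b ->
    lvl pb (nth d s a) != lvl pb (nth d s b).
  move=> a b ha hb hab; apply/eqP => E.
  have := dis a b ha hb hab; rewrite (HP _ _ (inP a ha) (inP b hb)) ?eqxx //.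
  exact: lvl_inj (HPX _ (inP a ha)) (HPX _ (inP b hb)) E.
have [m [mP mlv]] : exists m, m \in P /\ (0 < lvl pb m < n)%N.
  have l0 := lvl_le (HPX _ (inP 0%N isT)); have l1 := lvl_le (HPX _ (inP 1%N isT));
  have l2 := lvl_le (HPX _ (inP 2%N isT)).
  have d01 := ldis 0%N 1%N isT isT isT; have d02 := ldis 0%N 2%N isT isT isT;
  have d12 := ldis 1%N 2%N isT isT isT.
  case: (boolP (0 < lvl pb (nth d s 0) < n)%N) => h0; first by exists (nth d s 0); rewrite inP.
  case: (boolP (0 < lvl pb (nth d s 1) < n)%N) => h1; first by exists (nth d s 1); rewrite inP.
  case: (boolP (0 < lvl pb (nth d s 2) < n)%N) => h2; first by exists (nth d s 2); rewrite inP.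
  exfalso; move: l0 l1 l2 d01 d02 d12 h0 h1 h2.
  move: (lvl pb (nth d s 0)) (lvl pb (nth d s 1)) (lvl pb (nth d s 2)) => a b c.
  clear; lia.
have [z [zP gz zlv]] := Hwalk m mP.
have {}zlv := zlv mlv.
have zne : non_extreme z.
  rewrite /non_extreme; apply/andP; split; apply/eqP => E.
  - by move: zlv; rewrite E lvl_e0.
  - by move: zlv; rewrite E lvl_e1 ltnn andbF.
have [k [hk kne]] : exists k, (k < 3)%N /\ non_extreme (nth d s k).
  case: (boolP (non_extreme (nth d s 0))) => h0; first by exists 0%N.
  case: (boolP (non_extreme (nth d s 1))) => h1; first by exists 1%N.
  case: (boolP (non_extreme (nth d s 2))) => h2; first by exists 2%N.
  exfalso.
  have d01 := dis 0%N 1%N isT isT isT; have d02 := dis 0%N 2%N isT isT isT;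
  have d12 := dis 1%N 2%N isT isT isT.
  move: h0 h1 h2 d01 d02 d12; rewrite /non_extreme !negb_and !negbK.
  by case/orP => /eqP -> ; case/orP => /eqP -> ; case/orP => /eqP -> ; rewrite ?eqxx.
set x := nth d s k.
have xP : x \in P by apply: inP.
have xbad : bad pb P x by rewrite /bad xP HPX //= ng.
have Hlt := Hdiv P HP x z xP (HPX _ xP) kne zP (HPX _ zP) zne xbad gz.
set i := index z s.
have hi : (i < size s)%N by rewrite index_mem Hmem.
have zi : nth d s i = z by rewrite nth_index // Hmem.
have ji : (j <= i)%N.
  rewrite leqNgt; apply/negP => hij.
  by rewrite jdef in hij; have := before_find d hij; rewrite zi gz.
have Htr : transitive (fun x y => score y P <= score x P).
  by move=> ? ? ? h1 h2; exact: le_trans h2 h1.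
have := sorted_ltn_nth Htr d Hsort; rewrite /=.
move=> /(_ k i); rewrite !inE zi -/x => H.
have := H (leq_trans hk (leq_trans j3 (ltnW hj))) hi (leq_trans hk (leq_trans j3 ji)).
by move/(lt_le_trans Hlt); rewrite ltxx.
Qed.
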